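(* Let $A$ be a complex $2\times 2$ matrix with $\det(A)=1$, and let $A=PU$ be its polar decomposition, where $P$ is a positive definite Hermitian matrix and $U$ is unitary. Then $A+(A^{\mathbf c})^*$ is a nonzero real multiple of $U$; that is, $\varkappa^\circ([A]_{\mathbb{C}^*})=[A+(A^{\mathbf c})^*]_{\mathbb{R}^*}$, and this class lies in $PSU(2)$.
   Context: For a complex $2\times 2$ matrix $B=\begin{pmatrix}a&b\\ c&d\end{pmatrix}$ write $B^{\mathbf c}=\begin{pmatrix}d&-b\\ -c&a\end{pmatrix}$ and let $B^*$ denote the conjugate transpose. $\mathbb{C}P^3$ is the projectivization of the space of complex $2\times 2$ matrices; $[B]_{\mathbb{C}^*}$ denotes the class of a nonzero matrix up to nonzero complex scalars, and $[B]_{\mathbb{R}^*}$ the class up to nonzero real scalars. $PSL_2(\mathbb{C})\subset\mathbb{C}P^3$ is the set of classes with nonzero determinant, and $PSU(2)=\{[U]_{\mathbb{C}^*}: U\in SU(2)\}\subset PSL_2(\mathbb{C})$. The spherical coamoeba map $\varkappa^\circ\colon PSL_2(\mathbb{C})\to PSU(2)$ sends $[A]_{\mathbb{C}^*}$, with the representative $A$ chosen so that $\det(A)=1$, to the class of the unitary factor $U$ in the polar decomposition $A=PU$. *)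

(* Defs.v *)
From HB Require Import structures.
From mathcomp Require Import all_boot all_order all_algebra.
From mathcomp Require Import complex.
Set Implicit Arguments. Unset Strict Implicit. Unset Printing Implicit Defensive.
Import Order.TTheory GRing.Theory Num.Theory.
Local Open Scope ring_scope.
Local Open Scope complex_scope.

Definition ctmx (R : rcfType) (m n : nat) (B : 'M[R[i]]_(m, n)) : 'M[R[i]]_(n, m) :=
  (map_mx (@conjc R) B)^T.

(* B^c = [[d, -b], [-c, a]] for B = [[a, b], [c, d]] *)
Definition cmx (R : rcfType) (B : 'M[R[i]]_2) : 'M[R[i]]_2 :=
  \matrix_(i, j) if i == j then B (rev_ord i) (rev_ord j) else - B i j.

Definition hermitian2 (R : rcfType) (P : 'M[R[i]]_2) : Prop := ctmx P = P.

Definition posdef2 (R : rcfType) (P : 'M[R[i]]_2) : Prop :=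
  forall v : 'cV[R[i]]_2, v != 0 -> 0 < (ctmx v *m P *m v) ord0 ord0.

Definition unitary2 (R : rcfType) (U : 'M[R[i]]_2) : Prop := U *m ctmx U = 1%:M.

(* Main.v *)
Require Import Defs.
From HB Require Import structures.
From mathcomp Require Import all_boot all_order all_algebra.
From mathcomp Require Import complex.
From mathcomp Require Import ring.
Import Order.TTheory GRing.Theory Num.Theory.
Local Open Scope ring_scope.
Local Open Scope complex_scope.

Section Helpers.
Variable R : rcfType.
Implicit Types M N : 'M[R[i]]_2.

Lemma ord2 (i : 'I_2) : i = 0 \/ i = 1.
Proof. case: i => [[|[|//]] ?]; [left|right]; exact: val_inj. Qed.

Lemma l01 : lift ord0 (ord0 : 'I_1) = 1 :> 'I_2. Proof. exact: val_inj. Qed.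
Lemma o0 : ord0 = 0 :> 'I_2. Proof. exact: val_inj. Qed.

Lemma det2 M : \det M = M 0 0 * M 1 1 - M 0 1 * M 1 0.
Proof.
rewrite (expand_det_row _ 0) !big_ord_recl big_ord0 /cofactor !det_mx11 !mxE /=.
have e1 : lift (0 : 'I_2) (0 : 'I_1) = 1 by exact: val_inj.
have e2 : lift (ord0 : 'I_2) (0 : 'I_1) = 1 by exact: val_inj.
have e3 : lift (lift (ord0 : 'I_2) (ord0 : 'I_1)) (0 : 'I_1) = 0 by exact: val_inj.
rewrite ?e3 ?e1 ?e2 ?l01 ?o0 !add0n /bump /= expr0 expr1. ring.
Qed.

Lemma mul2 (m n : nat) (M : 'M[R[i]]_(m, 2)) (N : 'M[R[i]]_(2, n)) i j :
  (M *m N) i j = M i 0 * N 0 j + M i 1 * N 1 j.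
Proof. by rewrite mxE !big_ord_recl big_ord0 addr0 l01 o0. Qed.

Lemma ctE (m n : nat) (M : 'M[R[i]]_(m, n)) i j : ctmx M i j = conjc (M j i).
Proof. by rewrite /ctmx !mxE. Qed.

Lemma cmxE M : [/\ cmx M 0 0 = M 1 1, cmx M 0 1 = - M 0 1,
  cmx M 1 0 = - M 1 0 & cmx M 1 1 = M 0 0].
Proof.
have r0 : rev_ord (0 : 'I_2) = 1 by exact: val_inj.
have r1 : rev_ord (1 : 'I_2) = 0 by exact: val_inj.
by rewrite /cmx !mxE /= r0 r1.
Qed.

Ltac ent := apply/matrixP; let i := fresh "i" in let j := fresh "j" in intros i j; case: (ord2 i) => ->; case: (ord2 j) => ->.

Lemma cmx_mul M N : cmx (M *m N) = cmx N *m cmx M.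
Proof.
have [a1 a2 a3 a4] := cmxE (M *m N); have [b1 b2 b3 b4] := cmxE M;
have [c1 c2 c3 c4] := cmxE N.
ent; rewrite ?a1 ?a2 ?a3 ?a4 !mul2 ?b1 ?b2 ?b3 ?b4 ?c1 ?c2 ?c3 ?c4; ring.
Qed.

Lemma ctmx_mul M N : ctmx (M *m N) = ctmx N *m ctmx M.
Proof. by ent; rewrite !ctE !mul2 !ctE rmorphD !rmorphM; ring. Qed.

Lemma ctmxK M : ctmx (ctmx M) = M.
Proof. by apply/matrixP => i j; rewrite !ctE conjcK. Qed.

Lemma ctmx_cmx M : ctmx (cmx M) = cmx (ctmx M).
Proof.
have [a1 a2 a3 a4] := cmxE M; have [b1 b2 b3 b4] := cmxE (ctmx M).
by ent; rewrite ctE ?a1 ?a2 ?a3 ?a4 ?b1 ?b2 ?b3 ?b4 ?ctE ?rmorphN.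
Qed.

Lemma cmx_mulself M : cmx M *m M = (\det M)%:M.
Proof.
have [a1 a2 a3 a4] := cmxE M.
by ent; rewrite mul2 ?a1 ?a2 ?a3 ?a4 !mxE /= det2 ?mulr1n ?mulr0n; ring.
Qed.

Lemma addcmx M : M + cmx M = (M 0 0 + M 1 1)%:M.
Proof.
have [a1 a2 a3 a4] := cmxE M.
by ent; rewrite mxE ?a1 ?a2 ?a3 ?a4 !mxE /= ?mulr1n ?mulr0n; ring.
Qed.

Lemma det_ct M : \det (ctmx M) = conjc (\det M).
Proof. by rewrite !det2 !ctE rmorphB !rmorphM; ring. Qed.

Definition vec (a b : R[i]) : 'cV[R[i]]_2 := \matrix_(i, j) if i == 0 then a else b.

Lemma qfE M (a b : R[i]) :
  (ctmx (vec a b) *m M *m vec a b) 0 0 =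
  conjc a * (M 0 0 * a + M 0 1 * b) + conjc b * (M 1 0 * a + M 1 1 * b).
Proof. rewrite !mul2 !ctE !mxE /=. ring. Qed.

Lemma vec_neq0a a b : a != 0 -> vec a b != 0.
Proof. by move=> ha; apply/eqP => /matrixP /(_ 0 0); rewrite !mxE /=; apply/eqP. Qed.

Lemma vec_neq0b a b : b != 0 -> vec a b != 0.
Proof. by move=> hb; apply/eqP => /matrixP /(_ 1 0); rewrite !mxE /=; apply/eqP. Qed.

Lemma realconj (x : R[i]) : 0 <= x -> conjc x = x.
Proof. by case: x => a b /ger0_Im /= ->; rewrite oppr0. Qed.

End Helpers.
Arguments vec {R}.
Arguments vec_neq0a {R}.
Arguments vec_neq0b {R}.
Arguments qfE {R}.
Arguments realconj {R}.

Theorem lemma2p1 (R : rcfType) (A P U : 'M[R[i]]_2) :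
  \det A = 1 -> hermitian2 P -> posdef2 P -> unitary2 U -> A = P *m U ->
  (exists r : R, r != 0 /\ A + ctmx (cmx A) = r%:C *: U) /\ \det U = 1.
Proof.
move=> hA hP hpd hU eA.
have h00 : conjc (P 0 0) = P 0 0 by rewrite -ctE hP.
have h10 : conjc (P 1 0) = P 0 1 by rewrite -ctE hP.
have p00 : 0 < P 0 0.
  have := hpd (vec 1 0) (vec_neq0a _ _ (oner_neq0 _)).
  by rewrite qfE rmorph1 rmorph0 !mul0r !mulr0 !mul1r !addr0 mulr1.
have p11 : 0 < P 1 1.
  have := hpd (vec 0 1) (vec_neq0b _ _ (oner_neq0 _)).
  by rewrite qfE rmorph1 rmorph0 !mul0r !mulr0 !mul1r !add0r mulr1.
have dP : 0 < \det P.
  have := hpd (vec (- P 0 1) (P 0 0)) (vec_neq0b _ _ (lt0r_neq0 p00)).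
  have -> : (ctmx (vec (- P 0 1) (P 0 0)) *m P *m vec (- P 0 1) (P 0 0)) 0 0
     = P 0 0 * \det P.
    by rewrite qfE rmorphN h00 det2; ring.
  by rewrite pmulr_rgt0.
have dPU : \det P * \det U = 1 by rewrite -det_mulmx -eA.
have dUU : \det U * conjc (\det U) = 1 by rewrite -det_ct -det_mulmx hU det1.
have dU0 : 0 < \det U by rewrite -(pmulr_rgt0 _ dP) dPU ltr01.
have dU : \det U = 1.
  move: dUU; rewrite realconj ?ltW // => /eqP; rewrite -expr2 sqrf_eq1.
  case/orP => /eqP // hm; move: dU0; rewrite hm.
  by rewrite oppr_gt0 ltr10.
split=> //.
have ctU : cmx U = ctmx U.
  by rewrite -[cmx U]mulmx1 -hU mulmxA cmx_mulself dU mul1mx.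
have tpos : 0 < P 0 0 + P 1 1 by rewrite addr_gt0.
exists (complex.Re (P 0 0 + P 1 1)); split.
  by move: tpos; rewrite ltcE => /andP [_ h]; rewrite gt_eqF.
have -> : (complex.Re (P 0 0 + P 1 1))%:C = P 0 0 + P 1 1.
  by move: (ger0_Im (ltW tpos)); case: (P 0 0 + P 1 1) => a b /= ->.
rewrite -mul_scalar_mx -addcmx mulmxDl {1}eA; congr (_ + _).
by rewrite eA cmx_mul ctmx_mul ctmx_cmx hP ctU ctmxK.
Qed.
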